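(* Let $n\ge2$, $t\in\mathbb{Z}_{\ge0}$ and $\bm{N}=(t,0,\ldots,0,-t)\in\mathbb{Z}^{n+1}$. Then $|\mathcal{S}^+_n(\bm{N})|=J_{n-1,t}$. In particular, for $t\ge\binom{n-1}{2}$, $|\mathcal{S}^+_n(\bm{N})|=(n-1)!$.
   Context: For $\bm{M}=(M_0,\ldots,M_n)\in\mathbb{Z}^{n+1}$ with zero sum, $K_n(\bm{M})$ is the number of integer vectors $(f_{ij})_{0\le i<j\le n}\in\mathbb{Z}_{\ge0}^{\binom{n+1}{2}}$ with $\sum_{j>i} f_{ij}-\sum_{k<i} f_{ki}=M_i$ for all $i$. Let $\bm\delta=(n-1,\ldots,1,0)$; for a weak composition $\bm{j}=(j_0,\ldots,j_{n-1})$ of $\binom n2$, $K_n(\bm{j}-\bm\delta):=K_n(j_0-(n-1),\ldots,j_{n-1}-0,0)$. $\mathcal{S}^+_n(\bm{N})$ is the set of weak compositions $\bm{j}$ of $\binom n2$ with $\binom{N_0+n-1}{j_0}\binom{N_1+n-2}{j_1}\cdots\binom{N_{n-1}}{j_{n-1}}K_n(\bm{j}-\bm\delta)>0$. $J_{m,k}$ is the number of permutations of $\{1,\ldots,m\}$ with at most $k$ inversions. *)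

(* Defs.v *)
From HB Require Import structures.
From mathcomp Require Import all_boot all_order all_algebra all_fingroup.
Set Implicit Arguments. Unset Strict Implicit. Unset Printing Implicit Defensive.
Import Order.TTheory GRing.Theory Num.Theory.

(* Binomial coefficient binom(a, k) with integer top a and nat bottom k:
   binom(a,k) = a(a-1)...(a-k+1)/k!.  For a = -(m+1) this equals
   (-1)^k * binom(m+k, k). *)
Definition binomZ (a : int) (k : nat) : int :=
  match a with
  | Posz m => ('C(m, k))%:Z
  | Negz m => ((-1) ^+ k * ('C(m + k, k))%:Z)%R
  end.

(* A bound on every entry of a nonnegative flow with net outflow M on the
   acyclic complete graph 0 < 1 < ... < n (path decomposition):
   f_ij <= sum of positive M_i <= sum |M_i|.  Hence counting in the box
   [0, flow_bound M] is counting all flows. *)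
Definition flow_bound n (M : 'I_n.+1 -> int) : nat := (\sum_(i < n.+1) `|M i|)%N.

Definition is_flow n (M : 'I_n.+1 -> int) (B : nat)
    (f : {ffun 'I_n.+1 * 'I_n.+1 -> 'I_B.+1}) : bool :=
  [forall p : 'I_n.+1 * 'I_n.+1, ~~ (p.1 < p.2)%N ==> (nat_of_ord (f p) == 0)%N] &&
  [forall i : 'I_n.+1,
     ((\sum_(j < n.+1 | (i < j)%N) nat_of_ord (f (i, j)))%:Z
      - (\sum_(k < n.+1 | (k < i)%N) nat_of_ord (f (k, i)))%:Z == M i)%R].

Definition Kostant n (M : 'I_n.+1 -> int) : nat :=
  #|[set f : {ffun 'I_n.+1 * 'I_n.+1 -> 'I_(flow_bound M).+1} | is_flow M f]|.

Definition jminusdelta n (j : nat -> nat) : 'I_n.+1 -> int :=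
  fun i => if (i < n)%N then ((j i)%:Z - (n.-1 - i)%:Z)%R else 0%R.

Definition jnat n c (j : {ffun 'I_n -> 'I_c.+1}) (i : nat) : nat :=
  if (insub i : option 'I_n) is Some k then nat_of_ord (j k) else 0%N.

(* S^+_n(N): weak compositions j = (j_0,..,j_{n-1}) of binom(n,2) (each part is
   automatically <= binom(n,2)) with
   prod_i binom(N_i + n-1-i, j_i) * K_n(j - delta) > 0.
   N is given as a function nat -> int; only N_0..N_{n-1} are used. *)
Definition Splus n (N : nat -> int) : {set {ffun 'I_n -> 'I_('C(n, 2)).+1}} :=
  [set j : {ffun 'I_n -> 'I_('C(n, 2)).+1} |
     ((\sum_(i < n) nat_of_ord (j i))%N == 'C(n, 2)) &&
     (0 < (\prod_(i < n) binomZ (N i + (n.-1 - i)%:Z) (j i))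
            * (Kostant (@jminusdelta n (jnat j)))%:Z)%R].

Definition inv_count m (s : 'S_m) : nat :=
  #|[set p : 'I_m * 'I_m | (p.1 < p.2)%N && (s p.2 < s p.1)%N]|.

Definition Jperm (m k : nat) : nat := #|[set s : 'S_m | (inv_count s <= k)%N]|.

Definition Nvec (n t : nat) (i : nat) : int :=
  if i == 0%N then Posz t else if i == n then (- Posz t)%R else 0%R.

(* Main.v *)
Require Import Defs.
From mathcomp Require Import all_boot all_order all_algebra all_fingroup zify.
Set Implicit Arguments. Unset Strict Implicit. Unset Printing Implicit Defensive.


Lemma card_ord_lt m a : a <= m -> #|[set k : 'I_m | k < a]| = a.
Proof.
move=> ham.
have -> : [set k : 'I_m | k < a] = [set widen_ord ham k | k in 'I_a].
  apply/setP => k; rewrite inE; apply/idP/imsetP => [hk|[x _ ->]].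
    by exists (Ordinal hk) => //; apply: val_inj.
  by rewrite /= ltn_ord.
rewrite card_imset ?card_ord // => x y /(congr1 val) /= h; exact: val_inj.
Qed.

Lemma card_ord_gt m (i : 'I_m) : #|[set k : 'I_m | i < k]| = m - i.+1.
Proof.
have h := cardC [set k : 'I_m | k < i.+1].
rewrite card_ord card_ord_lt ?ltn_ord // in h.
have -> : #|[set k : 'I_m | i < k]| = #|[predC [set k : 'I_m | k < i.+1]]|.
  by apply: eq_card => k; rewrite !inE ltnNge.
lia.
Qed.

Lemma sum_sub_bin m : \sum_(i < m.+1) (m - i) = 'C(m.+1, 2).
Proof.
elim: m => [|m IH]; first by rewrite big_ord1.
rewrite big_ord_recl subn0 binS bin1 -IH addnC; congr (_ + _).
Qed.

Lemma sum_subS_bin m : \sum_(i < m) (m - i.+1) = 'C(m, 2).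
Proof.
case: m => [|m]; first by rewrite big_ord0.
rewrite -sum_sub_bin; apply: eq_bigr => i _; by rewrite subSS.
Qed.

Section Lehmer.
Variable m : nat.

Definition code (s : 'S_m) (i : 'I_m) : nat :=
  #|[set k : 'I_m | (i < k) && (s k < s i)]|.

Lemma code_lt (s : 'S_m) i : code s i < m - i.
Proof.
rewrite /code.
have : #|[set k : 'I_m | (i < k) && (s k < s i)]| <= #|[set k : 'I_m | i < k]|.
  by apply: subset_leq_card; apply/subsetP => k; rewrite !inE => /andP[].
rewrite card_ord_gt; have := ltn_ord i; lia.
Qed.

Lemma code_ltm (s : 'S_m) i : code s i < m.
Proof. have := code_lt s i; lia. Qed.

Definition codef (s : 'S_m) : {ffun 'I_m -> 'I_m} :=
  [ffun i => Ordinal (code_ltm s i)].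

Lemma inv_code (s : 'S_m) : inv_count s = \sum_(i < m) code s i.
Proof.
rewrite /inv_count -sum1_card.
rewrite (eq_bigl (fun p : 'I_m * 'I_m => (p.1 < p.2) && (s p.2 < s p.1)));
  last by move=> p; rewrite inE.
rewrite -(pair_big_dep xpredT (fun i j : 'I_m => (i < j) && (s j < s i)) (fun _ _ => 1)) /=.
apply: eq_bigr => i _; rewrite /code -sum1_card.
by apply: eq_bigl => k; rewrite inE.
Qed.

Lemma code_vals (s : 'S_m) i :
  code s i = #|[set v : 'I_m | (v < s i) && (i <= (s^-1)%g v)]|.
Proof.
rewrite /code -(card_imset _ (@perm_inj _ s)).
apply: eq_card => v; rewrite inE.
apply/imsetP/idP => [[k]|/andP[h1 h2]].
  by rewrite inE => /andP[h1 h2] ->; rewrite permK h2 ltnW.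
exists ((s^-1)%g v); last by rewrite permKV.
rewrite inE permKV h1 andbT ltn_neqAle h2 andbT.
apply/negP => /eqP e; have e2 : i = (s^-1)%g v by apply: val_inj.
by move: h1; rewrite e2 permKV ltnn.
Qed.

Lemma code_mono (s s' : 'S_m) (i : 'I_m) :
  (forall k : 'I_m, k < i -> s k = s' k) -> s i < s' i -> code s i < code s' i.
Proof.
move=> pre hlt; rewrite !code_vals.
have aux : forall (a b : 'S_m), (forall k : 'I_m, k < i -> a k = b k) ->
      forall v, (a^-1)%g v < i -> (b^-1)%g v = (a^-1)%g v.
  move=> a b hab v hv; apply: (@perm_inj _ b).
  by rewrite permKV -hab // permKV.
have pre' : forall k : 'I_m, k < i -> s' k = s k by move=> k hk; rewrite pre.
have eB : forall v, (i <= (s^-1)%g v) = (i <= (s'^-1)%g v).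
  move=> v; apply/idP/idP => h1; rewrite leqNgt; apply/negP => h2.
    by move: h1; rewrite (aux s' s pre' v h2) leqNgt h2.
  by move: h1; rewrite (aux s s' pre v h2) leqNgt h2.
apply: proper_card; rewrite properE; apply/andP; split.
  apply/subsetP => v; rewrite !inE eB => /andP[h1 ->]; rewrite andbT.
  exact: ltn_trans hlt.
apply/subsetPn; exists (s i); last by rewrite inE ltnn.
by rewrite inE hlt -eB permK leqnn.
Qed.

Lemma code_inj : injective codef.
Proof.
move=> s s' e.
have ec : forall i, code s i = code s' i.
  by move=> i; move/ffunP: e => /(_ i); rewrite !ffunE => /(congr1 val).
suff H : forall k (i : 'I_m), i < k -> s i = s' i.
  by apply/permP => i; apply: (H i.+1).
elim=> [//|k IH] i; rewrite ltnS leq_eqVlt => /orP[/eqP ei|]; last exact: IH.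
have pre : forall j : 'I_m, j < i -> s j = s' j by move=> j; rewrite ei; exact: IH.
case: (ltngtP (s i) (s' i)) => [h|h|/val_inj //].
  by have := code_mono pre h; rewrite ec ltnn.
have pre' : forall j : 'I_m, j < i -> s' j = s j by move=> j hj; rewrite pre.
by have := code_mono pre' h; rewrite ec ltnn.
Qed.

Lemma prod_sub_fact : \prod_(i < m) (m - i) = m`!.
Proof.
elim: m => [|n IH]; first by rewrite big_ord0.
rewrite big_ord_recl factS subn0; congr (_ * _).
rewrite -IH; apply: eq_bigr => i _; by rewrite lift0 subSS.
Qed.

Definition T0 := [set c : {ffun 'I_m -> 'I_m} | [forall i, c i < m - i]].

Lemma card_T0 : #|T0| = m`!.
Proof.
rewrite -prod_sub_fact.
have -> : #|T0| = #|family (fun i : 'I_m => [pred k : 'I_m | k < m - i])|.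
  apply: eq_card => c; rewrite inE; apply/forallP/familyP => h i; move: (h i) => //.
rewrite card_family foldrE big_map big_enum /=.
apply: eq_bigr => i _.
have -> : #|[pred k : 'I_m | k < m - i]| = #|[set k : 'I_m | k < m - i]|.
  by apply: eq_card => k; rewrite inE.
by rewrite card_ord_lt // leq_subr.
Qed.

Lemma image_T0 : [set codef s | s in 'S_m] = T0.
Proof.
apply/eqP; rewrite eqEcard; apply/andP; split.
  apply/subsetP => c /imsetP[s _ ->]; rewrite inE; apply/forallP => i.
  by rewrite ffunE /= code_lt.
rewrite card_T0 card_imset; last exact: code_inj.
by rewrite card_Sn.
Qed.

Definition Tset t := [set c : {ffun 'I_m -> 'I_m} |
   [forall i, c i < m - i] && (\sum_(i < m) nat_of_ord (c i) <= t)].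

Lemma Jperm_T t : Jperm m t = #|Tset t|.
Proof.
rewrite /Jperm -(card_imset _ code_inj).
apply: eq_card => c; apply/imsetP/idP => [[s]|].
  rewrite !inE => hs ->; apply/andP; split.
    by apply/forallP => i; rewrite ffunE /= code_lt.
  have -> : \sum_(i<m) nat_of_ord (codef s i) = \sum_(i<m) code s i.
    by apply: eq_bigr => i _; rewrite ffunE.
  by rewrite -inv_code.
rewrite inE => /andP[h1 h2].
have : c \in T0 by rewrite inE.
rewrite -image_T0 => /imsetP[s _ cE]; exists s => //.
rewrite inE inv_code; apply: leq_trans h2; rewrite cE leq_eqVlt; apply/orP; left.
by apply/eqP; apply: eq_bigr => i _; rewrite ffunE.
Qed.

Lemma inv_le (s : 'S_m) : inv_count s <= 'C(m, 2).
Proof.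
rewrite inv_code -sum_subS_bin; apply: leq_sum => i _.
have := code_lt s i; lia.
Qed.

End Lehmer.

Import Order.TTheory GRing.Theory Num.Theory.

Lemma Posz_sum I (r : seq I) (P : pred I) (F : I -> nat) :
  Posz (\sum_(i <- r | P i) F i) = (\sum_(i <- r | P i) Posz (F i))%R.
Proof. exact: (big_morph Posz PoszD (erefl _)). Qed.

Lemma flow_pos n (M : 'I_n.+1 -> int) :
  (forall i : 'I_n.+1, 0 < i -> (M i <= 0)%R) -> (\sum_i M i = 0)%R ->
  0 < Kostant M.
Proof.
move=> Mneg Msum.
set B := flow_bound M.
have bnd : forall x : 'I_n.+1, `|M x|%N < B.+1.
  move=> x; rewrite ltnS /B /flow_bound (bigD1 x) //=; exact: leq_addr.
pose g (p : 'I_n.+1 * 'I_n.+1) : nat :=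
  if (p.1 == ord0) && (0 < p.2) then `|M p.2|%N else 0.
have gB : forall p, g p < B.+1 by move=> p; rewrite /g; case: ifP.
pose f : {ffun 'I_n.+1 * 'I_n.+1 -> 'I_B.+1} := [ffun p => Ordinal (gB p)].
have fE : forall p, nat_of_ord (f p) = g p by move=> p; rewrite ffunE.
rewrite /Kostant; apply/card_gt0P; exists f; rewrite inE /is_flow.
apply/andP; split.
  apply/forallP => p; apply/implyP => hp; rewrite fE /g.
  case: ifP => // /andP[/eqP e1 e2]; by move: hp; rewrite e1 e2.
apply/forallP => i; apply/eqP.
have gz : forall a b : 'I_n.+1, a != ord0 -> g (a, b) = 0.
  by move=> a b h; rewrite /g /= (negbTE h).
case: (unliftP ord0 i) => [k ->|->].
  have lk : 0 < lift ord0 k by rewrite lift0.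
  rewrite big1 => [|j _]; last by rewrite fE gz.
  rewrite (bigD1 ord0) //= big1 => [|j /andP[_ hj]]; last by rewrite fE gz.
  rewrite addn0 fE /g /= sub0r lez0_abs ?opprK //; exact: Mneg.
have -> : (\sum_(k < n.+1 | k < @ord0 n) f (k, ord0))%N = 0.
  by apply: big1 => j; rewrite ltn0.
rewrite subr0.
have e : (M ord0 = - \sum_(j < n.+1 | (0 < j)%N) M j)%R.
  have := Msum; rewrite (bigD1 ord0) //= => h.
  rewrite (eq_bigl (fun j : 'I_n.+1 => (0 < j)%N)) in h; last by move=> j; rewrite lt0n.
  by apply/eqP; rewrite -subr_eq0 opprK h.
rewrite e Posz_sum -sumrN; apply: eq_bigr => j hj.
by rewrite fE /g /= hj /= lez0_abs // Mneg.
Qed.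

Lemma jnat_ord n c (j : {ffun 'I_n -> 'I_c.+1}) (k : 'I_n) : jnat j k = j k.
Proof.
rewrite /jnat; case: insubP => [u _ /val_inj -> // | ]; by rewrite ltn_ord.
Qed.

Lemma kost_pos m (j : {ffun 'I_m.+1 -> 'I_('C(m.+1, 2)).+1}) :
  \sum_(i < m.+1) nat_of_ord (j i) = 'C(m.+1, 2) ->
  (forall i : 'I_m.+1, 0 < i -> j i <= m - i) ->
  0 < Kostant (@jminusdelta m.+1 (jnat j)).
Proof.
move=> hs hb; apply: flow_pos.
  move=> i hi; rewrite /jminusdelta; case: ifP => // hin.
  rewrite -[nat_of_ord i]/(nat_of_ord (Ordinal hin)) jnat_ord /=.
  by rewrite subr_le0 lez_nat; apply: (hb (Ordinal hin)).
rewrite big_ord_recr /= {2}/jminusdelta /= ltnn addr0.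
rewrite (eq_bigr (fun i : 'I_m.+1 => Posz (j i) - Posz (m - i))%R); last first.
  move=> i _; rewrite /jminusdelta /= ltn_ord.
  by rewrite -[nat_of_ord i]/(nat_of_ord (widen_ord (leqnSn m.+1) i)) jnat_ord.
by rewrite sumrB -!Posz_sum hs sum_sub_bin subrr.
Qed.

Definition aB m t (i : 'I_m.+1) : nat := if i == 0 :> nat then t + m else m - i.
Definition Sp m t := [set j : {ffun 'I_m.+1 -> 'I_('C(m.+1, 2)).+1} |
  (\sum_(i < m.+1) nat_of_ord (j i) == 'C(m.+1, 2)) && [forall i, j i <= aB t i]].

Lemma Nvec_arg m t (i : 'I_m.+1) :
  (Nvec m.+1 t i + (m.+1.-1 - i)%:Z)%R = Posz (aB t i).
Proof.
rewrite /Nvec /aB /=; case: eqP => [->|_]; first by rewrite subn0 PoszD.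
by rewrite (ltn_eqF (ltn_ord i)) add0r.
Qed.

Lemma Splus_eq m t : Splus m.+1 (Nvec m.+1 t) = Sp m t.
Proof.
apply/setP => j; rewrite !inE; case: eqP => //= hs.
rewrite (eq_bigr (fun i : 'I_m.+1 => Posz 'C(aB t i, j i))); last first.
  by move=> i _; rewrite Nvec_arg.
rewrite -(big_morph Posz PoszM (erefl _)) -PoszM ltz_nat muln_gt0.
apply/andP/forallP => [[hp _] i | h].
  rewrite leqNgt; apply/negP => hi; move: hp.
  by rewrite (bigD1 i) //= bin_small // mul0n.
split; first by apply: prodn_gt0 => i; rewrite bin_gt0 h.
apply: kost_pos hs _ => i hi; have := h i; by rewrite /aB (gtn_eqF hi).
Qed.

Section Bij.
Variables m t : nat.

Lemma binS2 : 'C(m.+1, 2) = 'C(m, 2) + m.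
Proof. by rewrite binS bin1. Qed.

Lemma psi_lt (j : {ffun 'I_m.+1 -> 'I_('C(m.+1, 2)).+1}) (k : 'I_m) :
  m - k.+1 - j (lift ord0 k) < m.
Proof. have := ltn_ord k; lia. Qed.

Definition psi j : {ffun 'I_m -> 'I_m} := [ffun k => Ordinal (psi_lt j k)].

Lemma psiE j k : nat_of_ord (psi j k) = m - k.+1 - j (lift ord0 k).
Proof. by rewrite /psi ffunE. Qed.

Definition phi (c : {ffun 'I_m -> 'I_m}) : {ffun 'I_m.+1 -> 'I_('C(m.+1, 2)).+1} :=
  [ffun i => inord (if unlift ord0 i is Some k then m - k.+1 - c k
                    else m + \sum_(k < m) nat_of_ord (c k))].

Lemma Sp_facts j : j \in Sp m t ->
  [/\ \sum_(i < m.+1) nat_of_ord (j i) = 'C(m.+1, 2), j ord0 <= t + m &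
      forall k : 'I_m, j (lift ord0 k) <= m - k.+1].
Proof.
rewrite inE => /andP[/eqP hs /forallP hb].
have h0 : j ord0 <= t + m by have := hb ord0; rewrite /aB /=.
have hk : forall k : 'I_m, j (lift ord0 k) <= m - k.+1.
  by move=> k; have := hb (lift ord0 k); rewrite /aB lift0.
by split.
Qed.

Lemma T_facts (c : {ffun 'I_m -> 'I_m}) : c \in Tset m t ->
  (forall k : 'I_m, c k < m - k) /\ \sum_(k < m) nat_of_ord (c k) <= t.
Proof. by rewrite inE => /andP[/forallP h1 h2]. Qed.

Lemma sumc_le (c : {ffun 'I_m -> 'I_m}) : (forall k : 'I_m, c k < m - k) ->
  \sum_(k < m) nat_of_ord (c k) <= 'C(m, 2).
Proof.
move=> h; rewrite -(sum_subS_bin m); apply: leq_sum => k _; have := h k; lia.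
Qed.

Lemma phi_lift (c : {ffun 'I_m -> 'I_m}) k : (forall k : 'I_m, c k < m - k) ->
  nat_of_ord (phi c (lift ord0 k)) = m - k.+1 - c k.
Proof.
move=> h; rewrite ffunE liftK inordK //; rewrite binS2; lia.
Qed.

Lemma phi_0 (c : {ffun 'I_m -> 'I_m}) : (forall k : 'I_m, c k < m - k) ->
  nat_of_ord (phi c ord0) = m + \sum_(k < m) nat_of_ord (c k).
Proof.
move=> h; rewrite ffunE unlift_none inordK //; have := sumc_le h; rewrite binS2; lia.
Qed.

Lemma psi_sum (j : {ffun 'I_m.+1 -> 'I_('C(m.+1, 2)).+1}) :
  (forall k : 'I_m, j (lift ord0 k) <= m - k.+1) ->
  \sum_(k < m) nat_of_ord (psi j k) + \sum_(k < m) nat_of_ord (j (lift ord0 k)) = 'C(m, 2).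
Proof.
move=> hk; rewrite -big_split -(sum_subS_bin m); apply: eq_bigr => k _; rewrite psiE.
exact: subnK (hk k).
Qed.

Lemma psi_T (j : {ffun 'I_m.+1 -> 'I_('C(m.+1, 2)).+1}) :
  j \in Sp m t -> psi j \in Tset m t.
Proof.
move=> hj; have [hs h0 hk] := Sp_facts hj.
rewrite inE; apply/andP; split.
  by apply/forallP => k; rewrite psiE; have := ltn_ord k; lia.
have e1 := psi_sum hk.
move: hs; rewrite big_ord_recl => hs; have := binS2. set P := \sum_(k < m) nat_of_ord (psi j k) in e1 hs *. set L := \sum_(k < m) nat_of_ord (j (lift ord0 k)) in e1 hs *. lia.
Qed.

Lemma psi_inj' (j1 j2 : {ffun 'I_m.+1 -> 'I_('C(m.+1, 2)).+1}) :
  j1 \in Sp m t -> j2 \in Sp m t -> psi j1 = psi j2 -> j1 = j2.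
Proof.
move=> h1 h2 e.
have [hs1 _ hk1] := Sp_facts h1; have [hs2 _ hk2] := Sp_facts h2.
have hk : forall k : 'I_m, nat_of_ord (j1 (lift ord0 k)) = j2 (lift ord0 k).
  move=> k; move/ffunP: e => /(_ k) /(congr1 (@nat_of_ord m)); rewrite !psiE.
  have := hk1 k; have := hk2 k.
  set x1 := nat_of_ord (j1 (lift ord0 k)); set x2 := nat_of_ord (j2 (lift ord0 k)); lia.
apply/ffunP => i; apply: ord_inj; case: (unliftP ord0 i) => [k ->|->]; first exact: hk.
move: hs1 hs2; rewrite !big_ord_recl (eq_bigr _ (fun k _ => hk k)).
set L := \sum_(k < m) _.
set a1 := nat_of_ord (j1 ord0); set a2 := nat_of_ord (j2 ord0); lia.
Qed.

Lemma phi_Sp (c : {ffun 'I_m -> 'I_m}) : c \in Tset m t -> phi c \in Sp m t.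
Proof.
move=> hc; have [hc1 hc2] := T_facts hc.
rewrite inE; apply/andP; split.
  rewrite big_ord_recl phi_0 //.
  have e2 : \sum_(i < m) nat_of_ord (phi c (lift ord0 i)) = \sum_(k < m) (m - k.+1 - c k).
    by apply: eq_bigr => k _; exact: phi_lift.
  rewrite e2.
  have e1 : \sum_(k < m) (m - k.+1 - c k) + \sum_(k < m) nat_of_ord (c k) = 'C(m, 2).
    rewrite -big_split -(sum_subS_bin m); apply: eq_bigr => k _ /=.
    have := hc1 k; lia.
  apply/eqP; have := binS2; lia.
apply/forallP => i; rewrite /aB; case: (unliftP ord0 i) => [k ->|->].
  by rewrite phi_lift // lift0 /=; lia.
rewrite phi_0 //= addnC leq_add2r; exact: hc2.
Qed.

Lemma phi_inj' (c1 c2 : {ffun 'I_m -> 'I_m}) :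
  c1 \in Tset m t -> c2 \in Tset m t -> phi c1 = phi c2 -> c1 = c2.
Proof.
move=> h1 h2 e.
have [hc1 _] := T_facts h1; have [hc2 _] := T_facts h2.
apply/ffunP => k; apply: ord_inj.
move/ffunP: e => /(_ (lift ord0 k)) /(congr1 (@nat_of_ord ('C(m.+1, 2)).+1)).
rewrite !phi_lift //; have := hc1 k; have := hc2 k.
set x := nat_of_ord (c1 k); set y := nat_of_ord (c2 k); set z := nat_of_ord k; lia.
Qed.

Lemma psi_inj : {in Sp m t &, injective psi}.
Proof. move=> j1 j2; exact: psi_inj'. Qed.

Lemma phi_inj : {in Tset m t &, injective phi}.
Proof. move=> c1 c2; exact: phi_inj'. Qed.

Lemma card_Sp_T : #|Sp m t| = #|Tset m t|.
Proof.
apply/eqP; rewrite eqn_leq; apply/andP; split.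
  rewrite -(card_in_imset psi_inj); apply: subset_leq_card.
  by apply/subsetP => c /imsetP[j hj ->]; apply: psi_T.
rewrite -(card_in_imset phi_inj); apply: subset_leq_card.
by apply/subsetP => c /imsetP[j hj ->]; apply: phi_Sp.
Qed.

End Bij.

Theorem proposition6p5 (n t : nat) :
  (2 <= n)%N ->
  #|Splus n (Nvec n t)| = Jperm n.-1 t /\
  (('C(n.-1, 2) <= t)%N -> #|Splus n (Nvec n t)| = (n.-1)`!).
Proof.
case: n => [//|m] _ /=.
have H : #|Splus m.+1 (Nvec m.+1 t)| = Jperm m t.
  by rewrite Splus_eq card_Sp_T Jperm_T.
split => // ht; rewrite H /Jperm -card_Sn.
by apply: eq_card => s; rewrite inE (leq_trans (inv_le s) ht).
Qed.
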